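(* Let $(X,A,Y)$ be jointly distributed real-valued random variables ($X$ arbitrary) with $\mathbb{E}[A^2],\mathbb{E}[Y^2]<\infty$. Consider all (possibly randomized) representations $Z=g(X)$. Then the set $$\mathcal{R}_{\mathrm{LS}}:=\{(\operatorname{Var}\mathbb{E}[Y\mid Z],\ \operatorname{Var}\mathbb{E}[A\mid Z]) : Z=g(X)\}\subseteq\mathbb{R}^2$$ is convex.
   Context: A (possibly randomized) representation is $Z=g(X,S)$ for a measurable $g$ and auxiliary randomness $S$ independent of $(X,A,Y)$. $\operatorname{Var}\mathbb{E}[Y\mid Z]$ denotes the variance of the conditional expectation $\mathbb{E}[Y\mid Z]$. *)

(* Defs.v *)
From HB Require Import structures.
From mathcomp Require Import all_boot all_order all_algebra.
From mathcomp Require Import all_classical all_reals all_analysis.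
Set Implicit Arguments. Unset Strict Implicit. Unset Printing Implicit Defensive.
Import Order.TTheory GRing.Theory Num.Theory.
Local Open Scope classical_set_scope.
Local Open Scope ring_scope.

(* [is_cond_exp P Z Y h] : h \o Z is a version of the conditional
   expectation E[Y | Z] on the probability space (T, P): h is measurable
   (so h \o Z is sigma(Z)-measurable; by Doob-Dynkin every
   sigma(Z)-measurable real r.v. has this form), h \o Z is integrable and
   E[Y 1_{Z in B}] = E[h(Z) 1_{Z in B}] for every measurable B. *)
Definition is_cond_exp {d} {T : measurableType d} {R : realType}
  (P : probability T R) {dZ} {TZ : measurableType dZ}
  (Z : T -> TZ) (Y : T -> R) (h : TZ -> R) : Prop :=
  [/\ measurable_fun setT h,
      P.-integrable setT (fun w => (h (Z w))%:E) &
      forall B : set TZ, measurable B ->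
        (\int[P]_(w in Z @^-1` B) (Y w)%:E =
         \int[P]_(w in Z @^-1` B) (h (Z w))%:E)%E].

(* The set R_LS of pairs (Var E[Y|Z], Var E[A|Z]) over all (possibly
   randomized) representations Z = g(X, S), where S is auxiliary randomness
   with an arbitrary law Q on an arbitrary measurable space TS, independent
   of (X, A, Y): the underlying space is enlarged to (T * TS, P \x Q), with
   X, A, Y depending on the first coordinate and S the second one. *)
Definition R_LS {d} {T : measurableType d} {R : realType}
  (P : probability T R) {dX} {TX : measurableType dX}
  (X : T -> TX) (A Y : T -> R) : set (R * R) :=
  [set p | exists (dS : measure_display) (TS : measurableType dS)
             (Q : probability TS R)
             (dZ : measure_display) (TZ : measurableType dZ)
             (g : (TX * TS)%type -> TZ) (hY hA : TZ -> R),
      let Z := fun w : (T * TS)%type => g (X w.1, w.2) in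
      [/\ measurable_fun setT g,
          is_cond_exp (P \x Q)%E Z (fun w => Y w.1) hY,
          is_cond_exp (P \x Q)%E Z (fun w => A w.1) hA &
          p = (fine ('V_(P \x Q)%E [hY \o Z]), fine ('V_(P \x Q)%E [hA \o Z]))]].

(* Main.v *)
Require Import Defs.
From HB Require Import structures.
From mathcomp Require Import all_boot all_order all_algebra.
From mathcomp Require Import all_classical all_reals all_analysis.
From mathcomp Require Import measurable_realfun ring lra zify.
Import Order.TTheory GRing.Theory Num.Theory.
Local Open Scope classical_set_scope.
Local Open Scope ring_scope.
Section lift.
Local Open Scope ereal_scope.
Context {R : realType} {d1 d2 : measure_display} {T1 : measurableType d1} {T2 : measurableType d2}.
Variables (P1 : probability T1 R) (P2 : probability T2 R).

Lemma lift1_ge0 (f : T1 -> \bar R) : measurable_fun setT f -> (forall x, 0 <= f x) ->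
  \int[P1 \x P2]_w f w.1 = \int[P1]_x f x.
Proof.
move=> mf f0.
rewrite (fubini_tonelli1 (fun w : T1 * T2 => f w.1)) //=; last exact: (measurableT_comp mf measurable_fst).
apply: eq_integral => x _; rewrite /fubini_F /=.
rewrite integral_cst // [X in _ * X = _](_ : _ = 1) ?mule1 //; exact: probability_setT.
Qed.

Lemma lift2_ge0 (f : T2 -> \bar R) : measurable_fun setT f -> (forall x, 0 <= f x) ->
  \int[P1 \x P2]_w f w.2 = \int[P2]_x f x.
Proof.
move=> mf f0.
rewrite (fubini_tonelli2 (fun w : T1 * T2 => f w.2)) //=; last exact: (measurableT_comp mf measurable_snd).
apply: eq_integral => x _; rewrite /fubini_G /=.
rewrite integral_cst // [X in _ * X = _](_ : _ = 1) ?mule1 //; exact: probability_setT.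
Qed.
End lift.
Section mix.
Local Open Scope ereal_scope.
Context {R : realType} {d dS1 dS2 : measure_display} {T : measurableType d}
  {S1 : measurableType dS1} {S2 : measurableType dS2}.
Variables (P : probability T R) (Q1 : probability S1 R) (Q2 : probability S2 R).
Variable (t : R).
Hypothesis t01 : (0 <= t <= 1)%R.

Definition mixf {U : Type} (f1 : T * S1 -> U) (f2 : T * S2 -> U)
  (w : T * (bool * (S1 * S2))) : U :=
  if w.2.1 then f1 (w.1, w.2.2.1) else f2 (w.1, w.2.2.2).

Lemma measurable_mixf {dU : measure_display} {U : measurableType dU}
  {f1 : T * S1 -> U} {f2 : T * S2 -> U} :
  measurable_fun setT f1 -> measurable_fun setT f2 -> measurable_fun setT (mixf f1 f2).
Proof.
move=> mf1 mf2; apply: measurable_fun_if => //.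
- exact: (measurableT_comp measurable_fst measurable_snd).
- apply: measurable_funTS; apply: (measurableT_comp mf1).
  apply: measurable_fun_pair; first exact: measurable_fst.
  exact: (measurableT_comp measurable_fst (measurableT_comp measurable_snd measurable_snd)).
- apply: measurable_funTS; apply: (measurableT_comp mf2).
  apply: measurable_fun_pair; first exact: measurable_fst.
  exact: (measurableT_comp measurable_snd (measurableT_comp measurable_snd measurable_snd)).
Qed.

Definition Q12 : probability _ R := (Q1 \x Q2)%E.
Definition Bt : probability _ R := bernoulli_prob t.
Definition mixQ : probability _ R := (Bt \x Q12)%E.
Local Notation Q := mixQ.

Lemma mix_ge0 (f1 : T * S1 -> \bar R) (f2 : T * S2 -> \bar R) :
  measurable_fun setT f1 -> measurable_fun setT f2 ->
  (forall x, 0 <= f1 x) -> (forall x, 0 <= f2 x) ->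
  \int[P \x Q]_w mixf f1 f2 w =
  t%:E * \int[P \x Q1]_w f1 w + (1 - t)%:E * \int[P \x Q2]_w f2 w.
Proof.
move=> mf1 mf2 f10 f20.
have mm := measurable_mixf mf1 mf2.
have m0 : forall w, 0 <= mixf f1 f2 w by move=> w; rewrite /mixf; case: ifP.
rewrite (fubini_tonelli1 (mixf f1 f2)) //.
transitivity (\int[P]_x (t%:E * fubini_F Q1 f1 x + (1 - t)%:E * fubini_F Q2 f2 x)).
  apply: eq_integral => x _; rewrite /fubini_F.
  have mx : measurable_fun setT (fun s => mixf f1 f2 (x, s)).
    apply: (measurableT_comp mm); apply: measurable_fun_pair => //.
  rewrite (fubini_tonelli1 (fun s => mixf f1 f2 (x, s))) //.
  rewrite /Bt integral_bernoulli_prob //; last by move=> b; apply: integral_ge0.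
  rewrite /fubini_F /mixf /=.
  rewrite (lift1_ge0 _ _ (fun s1 => f1 (x, s1))) //; last first.
    by apply: (measurableT_comp mf1); apply: measurable_fun_pair.
  rewrite (lift2_ge0 _ _ (fun s2 => f2 (x, s2))) //.
  by apply: (measurableT_comp mf2); apply: measurable_fun_pair.
have mF1 := measurable_fun_fubini_tonelli_F (m2:=Q1) f1 mf1 f10.
have mF2 := measurable_fun_fubini_tonelli_F (m2:=Q2) f2 mf2 f20.
have F10 : forall x, 0 <= fubini_F Q1 f1 x by move=> x; apply: integral_ge0.
have F20 : forall x, 0 <= fubini_F Q2 f2 x by move=> x; apply: integral_ge0.
have t0 : (0 <= t)%R by case/andP: t01.
have t1 : (0 <= 1 - t)%R by case/andP: t01 => _; rewrite subr_ge0.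
rewrite ge0_integralD //; last 4 first.
- by move=> x _; rewrite mule_ge0.
- by apply: measurable_funeM.
- by move=> x _; rewrite mule_ge0.
- by apply: measurable_funeM.
rewrite ge0_integralZl // ?ge0_integralZl //.
by rewrite (fubini_tonelli1 f1) // (fubini_tonelli1 f2).
Qed.
End mix.
Lemma arith4 {R : realType} (t s : R) (a b c e : \bar R) :
  a \is a fin_num -> b \is a fin_num -> c \is a fin_num -> e \is a fin_num ->
  ((t%:E * a + s%:E * b) - (t%:E * c + s%:E * e) = t%:E * (a - c) + s%:E * (b - e))%E.
Proof.
move: a b c e => [a| |] [b| |] [c| |] [e| |] //= _ _ _ _.
rewrite -!EFinM -!EFinD; congr EFin; ring.
Qed.

Section mix2.
Local Open Scope ereal_scope.
Context {R : realType} {d dS1 dS2 : measure_display} {T : measurableType d}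
  {S1 : measurableType dS1} {S2 : measurableType dS2}.
Variables (P : probability T R) (Q1 : probability S1 R) (Q2 : probability S2 R).
Variable (t : R).
Hypothesis t01 : (0 <= t <= 1)%R.

Lemma mix_int (f1 : T * S1 -> \bar R) (f2 : T * S2 -> \bar R) :
  (P \x Q1).-integrable setT f1 -> (P \x Q2).-integrable setT f2 ->
  \int[P \x mixQ Q1 Q2 t]_w mixf f1 f2 w =
  t%:E * \int[P \x Q1]_w f1 w + (1 - t)%:E * \int[P \x Q2]_w f2 w.
Proof.
move=> i1 i2.
have /integrableP[mf1 _] := i1.
have /integrableP[mf2 _] := i2.
rewrite integralE (integralE _ _ f1) (integralE _ _ f2).
have -> : \int[P \x mixQ Q1 Q2 t]_w (mixf f1 f2)^\+ w =
          \int[P \x mixQ Q1 Q2 t]_w mixf f1^\+ f2^\+ w.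
  by apply: eq_integral => w _; rewrite /mixf !funeposE; case: (w.2.1).
have -> : \int[P \x mixQ Q1 Q2 t]_w (mixf f1 f2)^\- w =
          \int[P \x mixQ Q1 Q2 t]_w mixf f1^\- f2^\- w.
  by apply: eq_integral => w _; rewrite /mixf !funenegE; case: (w.2.1).
rewrite !mix_ge0 //; try exact: measurable_funepos; try exact: measurable_funeneg.
apply: arith4.
- exact: integrable_pos_fin_num.
- exact: integrable_pos_fin_num.
- exact: integrable_neg_fin_num.
- exact: integrable_neg_fin_num.
Qed.
End mix2.
Section L2.
Local Open Scope ereal_scope.
Context {d dZ : measure_display} {T : measurableType d} {R : realType}
  {TZ : measurableType dZ}.
Variables (P : probability T R) (Z : T -> TZ) (Y : T -> R) (h : TZ -> R).
Hypotheses (mZ : measurable_fun setT Z) (mY : measurable_fun setT Y)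
  (hc : is_cond_exp P Z Y h).

Lemma cell_bound (B : set TZ) (a s : R) : measurable B -> (0 < a)%R ->
  (s = 1 \/ s = -1)%R -> (forall z, B z -> a <= s * h z <= 2 * a)%R ->
  \int[P]_(w in Z @^-1` B) ((h (Z w))^+2)%:E <=
  4%:E * \int[P]_(w in Z @^-1` B) ((Y w)^+2)%:E.
Proof.
move=> mB a0 s1 hB.
case: hc => mh ih hcB.
have mC : measurable (Z @^-1` B) by rewrite -[X in measurable X]setTI; exact: mZ.
have mW : measurable_fun setT (fun w => h (Z w)) := measurableT_comp mh mZ.
have sa : (s * s = 1)%R by case: s1 => ->; rewrite ?mulr1 ?mulrNN ?mulr1.
set I := \int[P]_(w in Z @^-1` B) ((Y w)^+2)%:E.
have I0 : 0 <= I by apply: integral_ge0 => w _; rewrite lee_fin sqr_ge0.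
have fC : P (Z @^-1` B) \is a fin_num by apply: fin_num_measure.
set c := fine (P (Z @^-1` B)).
have PC : P (Z @^-1` B) = c%:E by rewrite fineK.
have c0 : (0 <= c)%R by rewrite fine_ge0 // measure_ge0.
have step1 : \int[P]_(w in Z @^-1` B) ((h (Z w))^+2)%:E <= (((2 * a)^+2) * c)%:E.
  rewrite EFinM -PC -integral_cst //.
  apply: ge0_le_integral => //.
  - by move=> w _; rewrite lee_fin sqr_ge0.
  - apply/measurable_EFinP; apply: measurable_funTS.
    exact: measurable_funX.
  - move=> w /= Bw; rewrite lee_fin; have := hB _ Bw.
    case: s1 => -> /andP[h1 h2]; nra.
have iC : P.-integrable (Z @^-1` B) (fun w => (h (Z w))%:E).
  by apply: integrableS ih.
have step2 : (a * c)%:E <= s%:E * \int[P]_(w in Z @^-1` B) (h (Z w))%:E.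
  rewrite -integralZl //.
  rewrite EFinM -PC -integral_cst //.
  apply: ge0_le_integral => //.
  - by move=> w _; rewrite lee_fin ltW.
  - apply: measurable_funTS; apply: measurable_funeM.
    exact/measurable_EFinP.
  - by move=> w Bw; have := hB _ Bw; rewrite lee_fin; case/andP.
rewrite -hcB // in step2.
have step3 : s%:E * \int[P]_(w in Z @^-1` B) (Y w)%:E <=
    \int[P]_(w in Z @^-1` B) `|(Y w)%:E|.
  apply: le_trans (le_abse_integral _ _ _); last 2 first.
  - exact: mC.
  - by apply: measurable_funTS; apply/measurable_EFinP.
  apply: le_trans (lee_abs _) _.
  by rewrite abseM; case: s1 => ->; rewrite ?EFinN ?abseN abse1 mul1e.
have step4 : \int[P]_(w in Z @^-1` B) `|(Y w)%:E| <=
    (2 * a)^-1%:E * I + (a / 2 * c)%:E.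
  have mY2 : measurable_fun (Z @^-1` B) (fun w => ((Y w)^+2)%:E).
    by apply: measurable_funTS; apply/measurable_EFinP; exact: measurable_funX.
  have Y20 : forall w, (Z @^-1` B) w -> 0 <= ((Y w)^+2)%:E.
    by move=> w _; rewrite lee_fin sqr_ge0.
  have k0' : 0 <= (2 * a)^-1%:E by rewrite lee_fin invr_ge0 mulr_ge0 // ltW.
  rewrite EFinM -PC -integral_cst // -ge0_integralZl //.
  have f10 : forall w, (Z @^-1` B) w -> 0 <= (2 * a)^-1%:E * ((Y w)^+2)%:E.
    by move=> w Bw; rewrite mule_ge0 // Y20.
  have mf1 : measurable_fun (Z @^-1` B) (fun w => (2 * a)^-1%:E * ((Y w)^+2)%:E).
    exact: measurable_funeM.
  have f20 : forall w, (Z @^-1` B) w -> 0 <= cst (a / 2)%:E w.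
    by move=> w _; rewrite lee_fin mulr_ge0 // ltW.
  have mf2 : measurable_fun (Z @^-1` B) (cst (a / 2)%:E : T -> \bar R).
    exact: measurable_cst.
  rewrite -ge0_integralD //.
  apply: ge0_le_integral => //.
  - apply: measurable_funTS; apply: measurableT_comp => //.
    exact/measurable_EFinP.
  - apply: emeasurable_funD.
    + apply: measurable_funTS; apply: measurable_funeM.
      by apply/measurable_EFinP; exact: measurable_funX.
    + exact: measurable_cst.
  - move=> w _ /=; rewrite -EFinM -EFinD /= lee_fin.
    have k0 : (0 < (2 * a)^-1)%R by rewrite invr_gt0 mulr_gt0.
    have k1 : ((2 * a)^-1 * (2 * a) = 1)%R by rewrite mulVf // gt_eqF // mulr_gt0.
    have ha : (a / 2 = (2 * a)^-1 * (a * a))%R.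
      by rewrite invfM mulrA -[X in (X * a)%R]mulrA mulVf ?gt_eqF // mulr1 mulrC.
    rewrite ha.
    have := sqr_ge0 (`|Y w| - a)%R.
    have := real_normK (num_real (Y w)).
    have := normr_ge0 (Y w).
    nra.
have key : (a * c)%:E <= (2 * a)^-1%:E * I + (a / 2 * c)%:E.
  exact: le_trans step2 (le_trans step3 step4).
apply: le_trans step1 _.
move: I0 key; clear step2 step3 step4; case: I => [i| |] //; last first.
  by move=> _ _; rewrite mulry gtr0_sg // mul1e leey.
rewrite -!EFinM -EFinD !lee_fin => i0 key.
have k1 : ((2 * a)^-1 * (2 * a) = 1)%R by rewrite mulVf // gt_eqF // mulr_gt0.
have k0 : (0 < (2 * a)^-1)%R by rewrite invr_gt0 mulr_gt0.
nra.
Qed.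

Lemma half_bound (s : R) : (s = 1 \/ s = -1)%R ->
  \int[P]_(w in Z @^-1` (h @^-1` [set x | (1 <= s * x)%R])) ((h (Z w))^+2)%:E <=
  4%:E * \int[P]_w ((Y w)^+2)%:E.
Proof.
move=> s1.
case: (hc) => mh _ _.
have ms : measurable_fun setT ( *%R s) := @mulrl_measurable R setT s.
pose F (n : nat) := Z @^-1` (h @^-1` (( *%R s) @^-1` `[(n.+1)%:R, (n.+2)%:R[%classic)).
have mF : forall n, measurable (F n).
  move=> n; rewrite /F -[X in measurable X]setTI; apply: (mZ measurableT).
  rewrite -[X in measurable X]setTI; apply: (mh measurableT).
  rewrite -[X in measurable X]setTI; apply: (ms measurableT).
  exact: measurable_itv.
have eqU : Z @^-1` (h @^-1` [set x | (1 <= s * x)%R]) = \bigcup_n F n.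
  apply/seteqP; split => w /=.
  - move=> h1.
    have v0 : (0 <= s * h (Z w))%R by apply: le_trans h1.
    have := truncn_itv v0.
    have := truncn_gt0 (s * h (Z w)); rewrite h1 => tg.
    exists (Num.truncn (s * h (Z w))).-1 => //.
    rewrite /F /= in_itv /= prednK //.
  - by move=> [k _]; rewrite /F /=; rewrite in_itv /= => /andP[h1 _]; apply: le_trans h1; rewrite ler1n.
have mW2 : measurable_fun setT (fun w => ((h (Z w))^+2)%:E).
  by apply/measurable_EFinP; apply: measurable_funX; exact: measurableT_comp.
have mY2 : measurable_fun setT (fun w => ((Y w)^+2)%:E).
  by apply/measurable_EFinP; apply: measurable_funX.
have tF : trivIset setT F.
  move=> n m _ _ [x []]; rewrite /F /= !in_itv /= => /andP[a1 a2] /andP[b1 b2].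
  have h1 : (n.+1%:R < m.+2%:R :> R)%R by apply: le_lt_trans a1 b2.
  have h2 : (m.+1%:R < n.+2%:R :> R)%R by apply: le_lt_trans b1 a2.
  move: h1 h2; rewrite !ltr_nat => h1 h2.
  lia.
rewrite eqU ge0_integral_bigcup //; last 2 first.
  - exact: measurable_funTS.
  - by move=> w _; rewrite lee_fin sqr_ge0.
apply: le_trans (_ : \sum_(n <oo) (4%:E * \int[P]_(w in F n) ((Y w)^+2)%:E) <= _).
  apply: lee_nneseries.
  - by move=> n _ _; apply: integral_ge0 => w _; rewrite lee_fin sqr_ge0.
  - move=> n _; apply: (cell_bound _ n.+1%:R s); last 2 first.
    + exact: s1.
    + move=> z /=; rewrite in_itv /= => /andP[h1 h2].
      rewrite h1 /= (le_trans (ltW h2)) //.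
      have e1 : (n.+1%:R = n%:R + 1 :> R)%R by rewrite -[n.+1]addn1 natrD.
      have e2 : (n.+2%:R = n%:R + 2 :> R)%R by rewrite -[n.+2]addn2 natrD.
      by rewrite e1 e2; have := ler0n R n; lra.
    + rewrite -[X in measurable X]setTI; apply: (mh measurableT).
      rewrite -[X in measurable X]setTI; apply: (ms measurableT).
      exact: measurable_itv.
    + by rewrite ltr0Sn.
rewrite nneseriesZl; last by move=> n _; apply: integral_ge0 => w _; rewrite lee_fin sqr_ge0.
rewrite -ge0_integral_bigcup //; last 2 first.
  - exact: measurable_funTS.
  - by move=> w _; rewrite lee_fin sqr_ge0.
rewrite lee_pmul2l //.
apply: ge0_subset_integral => //.
  exact: bigcup_measurable.
by move=> w _; rewrite lee_fin sqr_ge0.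
Qed.

Lemma cond_sq_fin : \int[P]_w ((Y w)^+2)%:E < +oo ->
  \int[P]_w ((h (Z w))^+2)%:E < +oo.
Proof.
move=> Yfin.
case: (hc) => mh _ _.
set f := fun w => ((h (Z w))^+2)%:E.
have mf : measurable_fun setT f.
  by apply/measurable_EFinP; apply: measurable_funX; exact: measurableT_comp.
have f0 : forall w, 0 <= f w by move=> w; rewrite lee_fin sqr_ge0.
have mA : forall s : R, measurable (Z @^-1` (h @^-1` [set x | (1 <= s * x)%R])).
  move=> s.
  have ms : measurable_fun setT ( *%R s) := @mulrl_measurable R setT s.
  have -> : [set x | (1 <= s * x)%R] = ( *%R s) @^-1` `[1%R, +oo[%classic.
    by apply/seteqP; split => x /=; rewrite in_itv /= andbT.
  rewrite -[X in measurable X]setTI; apply: (mZ measurableT).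
  rewrite -[X in measurable X]setTI; apply: (mh measurableT).
  rewrite -[X in measurable X]setTI; apply: (ms measurableT).
  exact: measurable_itv.
set A1 := Z @^-1` (h @^-1` [set x | (1 <= 1 * x)%R]).
set A2 := Z @^-1` (h @^-1` [set x | (1 <= -1 * x)%R]).
have mA1 : measurable A1 by exact: mA.
have mA2 : measurable A2 by exact: mA.
have mf1 : measurable_fun setT (f \_ A1).
  by apply/(measurable_restrictT _ mA1); exact: measurable_funTS.
have mf2 : measurable_fun setT (f \_ A2).
  by apply/(measurable_restrictT _ mA2); exact: measurable_funTS.
have p1 : forall w, 0 <= (f \_ A1) w by move=> w; rewrite patchE; case: ifP.
have p2 : forall w, 0 <= (f \_ A2) w by move=> w; rewrite patchE; case: ifP.
have le1 : \int[P]_w f w <= \int[P]_w (cst 1 w + (f \_ A1) w + (f \_ A2) w).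
  apply: (@ge0_le_integral _ _ _ P setT measurableT f _ (fun w _ => f0 w) mf).
  - apply: emeasurable_funD => //; apply: emeasurable_funD => //.
  - move=> w _.
    have [H1|H1] := pselect (A1 w).
      rewrite /= [X in _ <= _ + X + _]patchE (mem_set H1).
      apply: le_trans (_ : 1 + f w <= _); first by rewrite leeDr.
      by rewrite leeDl.
    have [H2|H2] := pselect (A2 w).
      rewrite /= [X in _ <= _ + X]patchE (mem_set H2).
      by rewrite -[X in X <= _]add0e leeD // adde_ge0.
    rewrite /= !patchE (memNset H1) (memNset H2) !adde0 /f lee_fin.
    move: H1 H2; rewrite /A1 /A2 /= !mul1r => /negP; rewrite -ltNge => H1 /negP; rewrite -ltNge => H2.
    rewrite mulN1r in H2.
    nra.
have mc : measurable_fun setT (cst 1 : T -> \bar R) by exact: measurable_cst.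
have c0 : forall w, 0 <= (cst 1 : T -> \bar R) w by move=> w; rewrite lee01.
have mc1 : measurable_fun setT (fun w => cst 1 w + (f \_ A1) w) by exact: emeasurable_funD.
have c10 : forall w, setT w -> 0 <= cst 1 w + (f \_ A1) w by move=> w _; rewrite adde_ge0.
rewrite ge0_integralD // in le1.
rewrite ge0_integralD // in le1.
rewrite -!integral_mkcond integral_cst // in le1.
have b1 := half_bound 1%R (or_introl erefl).
have b2 := half_bound (-1)%R (or_intror erefl).
rewrite -/A1 -/f in b1; rewrite -/A2 -/f in b2.
have I0 : 0 <= \int[P]_w ((Y w)^+2)%:E by apply: integral_ge0 => w _; rewrite lee_fin sqr_ge0.
have Ifin : \int[P]_w ((Y w)^+2)%:E \is a fin_num by rewrite ge0_fin_numE.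
rewrite -(fineK Ifin) -EFinM in b1 b2.
apply: le_lt_trans le1 _.
rewrite [X in 1 * X](_ : _ = 1) ?mule1; last exact: probability_setT.
apply: le_lt_trans (_ : 1 + (4 * fine (\int[P]_w ((Y w)^+2)%:E))%:E + (4 * fine (\int[P]_w ((Y w)^+2)%:E))%:E < +oo).
  by rewrite leeD // leeD.
by rewrite -!EFinD ltry.
Qed.
End L2.
Section lift2.
Local Open Scope ereal_scope.
Context {R : realType} {d1 d2 : measure_display} {T1 : measurableType d1} {T2 : measurableType d2}.
Variables (P1 : probability T1 R) (P2 : probability T2 R).

Lemma lift1 (f : T1 -> \bar R) : measurable_fun setT f ->
  \int[P1 \x P2]_w f w.1 = \int[P1]_x f x.
Proof.
move=> mf.
rewrite integralE (integralE _ _ f).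
have -> : \int[P1 \x P2]_w (fun w => f w.1)^\+ w = \int[P1 \x P2]_w f^\+ w.1.
  by apply: eq_integral => w _; rewrite !funeposE.
have -> : \int[P1 \x P2]_w (fun w => f w.1)^\- w = \int[P1 \x P2]_w f^\- w.1.
  by apply: eq_integral => w _; rewrite !funenegE.
rewrite (lift1_ge0 _ _ f^\+) ?(lift1_ge0 _ _ f^\-) //.
- exact: measurable_funeneg.
- exact: measurable_funepos.
Qed.

Lemma lift1_integrable (f : T1 -> \bar R) : P1.-integrable setT f ->
  (P1 \x P2).-integrable setT (fun w => f w.1).
Proof.
move=> /integrableP[mf fi]; apply/integrableP; split.
  exact: (measurableT_comp mf measurable_fst).
rewrite (lift1_ge0 _ _ (abse \o f)) //.
exact: measurableT_comp.
by move=> x; exact: abse_ge0.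
Qed.
End lift2.

Lemma prob_inhabited {d} {T : measurableType d} {R : realType} (P : probability T R) :
  exists w : T, True.
Proof.
case: (pselect (exists w : T, True)) => // nT.
have e : [set: T] = set0.
  by apply/seteqP; split => w // _; apply: nT; exists w.
have := probability_setT P; rewrite e measure0 => -[] /esym /eqP.
by rewrite oner_eq0.
Qed.

Lemma varE {d} {T : measurableType d} {R : realType} (P : probability T R) (W : T -> R) :
  'V_P[W] = (\int[P]_w (((W w - fine (\int[P]_x (W x)%:E)) *
                         (W w - fine (\int[P]_x (W x)%:E)))%:E))%E.
Proof. by rewrite /variance !unlock. Qed.
Lemma sq_shift_fin {d} {T : measurableType d} {R : realType} (P : probability T R)
  (W : T -> R) (m : R) : measurable_fun setT W ->
  (\int[P]_w ((W w)^+2)%:E < +oo)%E ->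
  (\int[P]_w (((W w - m) * (W w - m))%:E))%E \is a fin_num.
Proof.
move=> mW Wfin.
rewrite ge0_fin_numE; last by apply: integral_ge0 => w _; rewrite lee_fin -expr2 sqr_ge0.
have I0 : (0 <= \int[P]_w ((W w)^+2)%:E)%E by apply: integral_ge0 => w _; rewrite lee_fin sqr_ge0.
have Ifin : (\int[P]_w ((W w)^+2)%:E)%E \is a fin_num by rewrite ge0_fin_numE.
have mW2 : measurable_fun setT (fun w => ((W w)^+2)%:E).
  by apply/measurable_EFinP; exact: measurable_funX.
apply: (@le_lt_trans _ _ (\int[P]_w (2%:E * ((W w)^+2)%:E + (cst (2 * m ^+ 2)%:E) w))%E).
  apply: ge0_le_integral => //.
  - by move=> w _; rewrite lee_fin -expr2 sqr_ge0.
  - apply/measurable_EFinP; apply: measurable_funM; apply: measurable_funB => //.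
  - apply: emeasurable_funD; first exact: measurable_funeM.
    exact: measurable_cst.
  - move=> w _; rewrite /= -EFinM -EFinD lee_fin !expr2.
    have := sqr_ge0 (W w + m); rewrite expr2; nra.
have a0 : forall w, setT w -> (0 <= 2%:E * ((W w)^+2)%:E)%E.
  by move=> w _; rewrite mule_ge0 // lee_fin sqr_ge0.
have ma : measurable_fun setT (fun w => 2%:E * ((W w)^+2)%:E)%E by exact: measurable_funeM.
have b0 : forall w, setT w -> (0 <= (cst (2 * m ^+ 2)%:E : T -> \bar R) w)%E.
  by move=> w _; rewrite lee_fin mulr_ge0 // sqr_ge0.
have mb : measurable_fun setT (cst (2 * m ^+ 2)%:E : T -> \bar R) by exact: measurable_cst.
rewrite ge0_integralD //.
rewrite ge0_integralZl //; last by move=> w _; rewrite lee_fin sqr_ge0.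
rewrite integral_cst // -(fineK Ifin) -EFinM.
rewrite [X in (_ * X)%E](_ : _ = 1%E) ?mule1; last exact: probability_setT.
by rewrite -EFinD ltry.
Qed.
Section mixrep.
Local Open Scope ereal_scope.
Context {R : realType} {d dS1 dS2 dZ1 dZ2 : measure_display} {T : measurableType d}
  {S1 : measurableType dS1} {S2 : measurableType dS2}
  {TZ1 : measurableType dZ1} {TZ2 : measurableType dZ2}.
Variables (P : probability T R) (Q1 : probability S1 R) (Q2 : probability S2 R).
Variable (t : R).
Hypothesis t01 : (0 <= t <= 1)%R.
Variables (Z1 : T * S1 -> TZ1) (Z2 : T * S2 -> TZ2) (Y : T -> R)
  (h1 : TZ1 -> R) (h2 : TZ2 -> R) (c1 : TZ1) (c2 : TZ2).
Hypotheses (mZ1 : measurable_fun setT Z1) (mZ2 : measurable_fun setT Z2)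
  (HY : Y \in Lfun P 2%:E)
  (cY1 : is_cond_exp (P \x Q1) Z1 (fun w => Y w.1) h1)
  (cY2 : is_cond_exp (P \x Q2) Z2 (fun w => Y w.1) h2).

Definition mixZ := mixf (fun v => (true, (Z1 v, c2))) (fun v => (false, (c1, Z2 v))).
Definition mixh (z : bool * (TZ1 * TZ2)) := if z.1 then h1 z.2.1 else h2 z.2.2.

Lemma measurable_mixZ : measurable_fun setT mixZ.
Proof.
apply: (measurable_mixf (f1 := fun v => (true, (Z1 v, c2))) (f2 := fun v => (false, (c1, Z2 v)))).
- apply: measurable_fun_pair; first exact: measurable_cst.
  by apply: measurable_fun_pair => //; exact: measurable_cst.
- apply: measurable_fun_pair; first exact: measurable_cst.
  by apply: measurable_fun_pair => //; exact: measurable_cst.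
Qed.

Lemma measurable_mixh : measurable_fun setT h1 -> measurable_fun setT h2 ->
  measurable_fun setT mixh.
Proof.
move=> mh1 mh2; apply: measurable_fun_if => //.
all: try exact: measurable_fst.
all: apply: measurable_funTS.
- apply: (measurableT_comp mh1).
  exact: (measurableT_comp measurable_fst measurable_snd).
- apply: (measurableT_comp mh2).
  exact: (measurableT_comp measurable_snd measurable_snd).
Qed.

Let mY : measurable_fun setT Y.
Proof. by move: HY; rewrite inE => /andP[]; rewrite inE. Qed.

Let Y1 : P.-integrable setT (EFin \o Y).
Proof. by apply/Lfun1_integrable; apply: (Lfun_subset12 (fin_num_measure _ _ _)). Qed.

Lemma mix_cond : is_cond_exp (P \x mixQ Q1 Q2 t) mixZ (fun w => Y w.1) mixh.
Proof.
case: cY1 => mh1 ih1 e1.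
case: cY2 => mh2 ih2 e2.
have mh := measurable_mixh mh1 mh2.
split => //.
- apply/integrableP; split.
    by apply/measurable_EFinP; exact: (measurableT_comp mh measurable_mixZ).
  have -> : \int[P \x mixQ Q1 Q2 t]_w `|(mixh (mixZ w))%:E| =
      \int[P \x mixQ Q1 Q2 t]_w mixf (fun v => `|(h1 (Z1 v))%:E|) (fun v => `|(h2 (Z2 v))%:E|) w.
    by apply: eq_integral => -[x [[] [s1 s2]]] _.
  rewrite (mix_ge0 P Q1 Q2 t t01); last 4 first.
  - by apply: measurableT_comp => //; apply/measurable_EFinP; exact: measurableT_comp.
  - by apply: measurableT_comp => //; apply/measurable_EFinP; exact: measurableT_comp.
  - by move=> x; exact: abse_ge0.
  - by move=> x; exact: abse_ge0.
  have /integrableP[_ f1] := ih1.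
  have /integrableP[_ f2] := ih2.
  have g1 : \int[P \x Q1]_w `|(h1 (Z1 w))%:E| \is a fin_num.
    by rewrite ge0_fin_numE // integral_ge0.
  have g2 : \int[P \x Q2]_w `|(h2 (Z2 w))%:E| \is a fin_num.
    by rewrite ge0_fin_numE // integral_ge0.
  by rewrite -(fineK g1) -(fineK g2) -!EFinM -EFinD ltry.
- move=> B mB.
  pose B1 := (fun z1 => (true, (z1, c2))) @^-1` B.
  pose B2 := (fun z2 => (false, (c1, z2))) @^-1` B.
  have mk1 : measurable_fun setT (fun z1 : TZ1 => (true, (z1, c2))).
    apply: measurable_fun_pair; first exact: measurable_cst.
    by apply: measurable_fun_pair => //; exact: measurable_cst.
  have mB1 : measurable B1.
    by rewrite /B1 -[X in measurable X]setTI; exact: (mk1 measurableT _ mB).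
  have mk2 : measurable_fun setT (fun z2 : TZ2 => (false, (c1, z2))).
    apply: measurable_fun_pair; first exact: measurable_cst.
    by apply: measurable_fun_pair => //; exact: measurable_cst.
  have mB2 : measurable B2.
    by rewrite /B2 -[X in measurable X]setTI; exact: (mk2 measurableT _ mB).
  have mC1 : measurable (Z1 @^-1` B1).
    by rewrite -[X in measurable X]setTI; apply: (mZ1 measurableT _ mB1).
  have mC2 : measurable (Z2 @^-1` B2).
    by rewrite -[X in measurable X]setTI; apply: (mZ2 measurableT _ mB2).
  rewrite [LHS]integral_mkcond [RHS]integral_mkcond.
  have -> : \int[P \x mixQ Q1 Q2 t]_w ((fun w => (Y w.1)%:E) \_ (mixZ @^-1` B)) w =
      \int[P \x mixQ Q1 Q2 t]_w mixf ((fun v => (Y v.1)%:E) \_ (Z1 @^-1` B1))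
                                      ((fun v => (Y v.1)%:E) \_ (Z2 @^-1` B2)) w.
    by apply: eq_integral => -[x [[] [s1 s2]]] _; rewrite /mixf !patchE.
  have -> : \int[P \x mixQ Q1 Q2 t]_w ((fun w => (mixh (mixZ w))%:E) \_ (mixZ @^-1` B)) w =
      \int[P \x mixQ Q1 Q2 t]_w mixf ((fun v => (h1 (Z1 v))%:E) \_ (Z1 @^-1` B1))
                                      ((fun v => (h2 (Z2 v))%:E) \_ (Z2 @^-1` B2)) w.
    by apply: eq_integral => -[x [[] [s1 s2]]] _; rewrite /mixf !patchE.
  have iY1 : (P \x Q1).-integrable setT (fun w => (Y w.1)%:E) := lift1_integrable P Q1 (EFin \o Y) Y1.
  have iY2 : (P \x Q2).-integrable setT (fun w => (Y w.1)%:E) := lift1_integrable P Q2 (EFin \o Y) Y1.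
  rewrite !(mix_int P Q1 Q2 t t01).
  + by rewrite -!integral_mkcond e1 // e2.
  + apply/(integrable_mkcond _ mC1); exact: (integrableS measurableT mC1 (@subsetT _ _) ih1).
  + apply/(integrable_mkcond _ mC2); exact: (integrableS measurableT mC2 (@subsetT _ _) ih2).
  + apply/(integrable_mkcond _ mC1); exact: (integrableS measurableT mC1 (@subsetT _ _) iY1).
  + apply/(integrable_mkcond _ mC2); exact: (integrableS measurableT mC2 (@subsetT _ _) iY2).
Qed.

Lemma mix_var : fine 'V_(P \x mixQ Q1 Q2 t)[mixh \o mixZ] =
  (t * fine 'V_(P \x Q1)[h1 \o Z1] + (1 - t) * fine 'V_(P \x Q2)[h2 \o Z2])%R.
Proof.
have [mh1 ih1 e1] := cY1.
have [mh2 ih2 e2] := cY2.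
have [mh _ e] := mix_cond.
have mYE : measurable_fun setT (EFin \o Y) by exact/measurable_EFinP.
have E1 : \int[P \x Q1]_w ((h1 \o Z1) w)%:E = \int[P]_x (Y x)%:E.
  rewrite -[in RHS](lift1 P Q1 (EFin \o Y)) //.
  by have := e1 setT measurableT; rewrite preimage_setT => <-.
have E2 : \int[P \x Q2]_w ((h2 \o Z2) w)%:E = \int[P]_x (Y x)%:E.
  rewrite -[in RHS](lift1 P Q2 (EFin \o Y)) //.
  by have := e2 setT measurableT; rewrite preimage_setT => <-.
have Em : \int[P \x mixQ Q1 Q2 t]_w ((mixh \o mixZ) w)%:E = \int[P]_x (Y x)%:E.
  rewrite -[in RHS](lift1 P (mixQ Q1 Q2 t) (EFin \o Y)) //.
  by have := e setT measurableT; rewrite preimage_setT => <-.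
rewrite !varE E1 E2 Em.
set m := fine (\int[P]_x (Y x)%:E).
have mW1 : measurable_fun setT (h1 \o Z1) by exact: measurableT_comp.
have mW2 : measurable_fun setT (h2 \o Z2) by exact: measurableT_comp.
have -> : \int[P \x mixQ Q1 Q2 t]_w ((((mixh \o mixZ) w) - m) * (((mixh \o mixZ) w) - m))%:E =
   \int[P \x mixQ Q1 Q2 t]_w mixf (fun v => ((((h1 \o Z1) v) - m) * (((h1 \o Z1) v) - m))%:E)
                                  (fun v => ((((h2 \o Z2) v) - m) * (((h2 \o Z2) v) - m))%:E) w.
  by apply: eq_integral => -[x [[] [s1 s2]]] _.
rewrite (mix_ge0 P Q1 Q2 t t01); last 4 first.
- apply/measurable_EFinP; apply: measurable_funM; apply: measurable_funB => //.
- apply/measurable_EFinP; apply: measurable_funM; apply: measurable_funB => //.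
- by move=> v; rewrite lee_fin -expr2 sqr_ge0.
- by move=> v; rewrite lee_fin -expr2 sqr_ge0.
have Y2 : \int[P]_x ((Y x)^+2)%:E < +oo.
  have H := Lfun2_integrable_sqr HY. have := integrable_lty measurableT H. by [].
have mY2 : measurable_fun setT (fun x => ((Y x)^+2)%:E).
  by apply/measurable_EFinP; exact: measurable_funX.
have mY1 : measurable_fun setT (fun w : T * S1 => Y w.1) by exact: (measurableT_comp mY measurable_fst).
have mY2' : measurable_fun setT (fun w : T * S2 => Y w.1) by exact: (measurableT_comp mY measurable_fst).
have Yf1 : \int[P \x Q1]_w ((Y w.1)^+2)%:E < +oo.
  rewrite (lift1_ge0 P Q1 (fun x => ((Y x)^+2)%:E)) // => x.
  by rewrite lee_fin sqr_ge0.
have Yf2 : \int[P \x Q2]_w ((Y w.1)^+2)%:E < +oo.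
  rewrite (lift1_ge0 P Q2 (fun x => ((Y x)^+2)%:E)) // => x.
  by rewrite lee_fin sqr_ge0.
have V1 := sq_shift_fin (P \x Q1)%E (h1 \o Z1) m mW1 (cond_sq_fin _ _ _ _ mZ1 mY1 cY1 Yf1).
have V2 := sq_shift_fin (P \x Q2)%E (h2 \o Z2) m mW2 (cond_sq_fin _ _ _ _ mZ2 mY2' cY2 Yf2).
by rewrite -(fineK V1) -(fineK V2) -!EFinM -EFinD.
Qed.
End mixrep.
Theorem lemma1 (d : measure_display) (T : measurableType d) (R : realType)
  (P : probability T R) (dX : measure_display) (TX : measurableType dX)
  (X : T -> TX) (A Y : T -> R) :
  measurable_fun setT X ->
  A \in Lfun P 2%:E -> Y \in Lfun P 2%:E ->
  forall (p q : R * R) (t : R),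
    R_LS P X A Y p -> R_LS P X A Y q -> 0 <= t <= 1 ->
    R_LS P X A Y (t * p.1 + (1 - t) * q.1, t * p.2 + (1 - t) * q.2).
Proof.
move=> mX HA HY p q t Rp Rq t01.
move: Rp => [dS1 [TS1 [Q1 [dZ1 [TZ1 [g1 [hY1 [hA1 H1]]]]]]]].
move: H1 => /= [mg1 cY1 cA1 ->].
move: Rq => [dS2 [TS2 [Q2 [dZ2 [TZ2 [g2 [hY2 [hA2 H2]]]]]]]].
move: H2 => /= [mg2 cY2 cA2 ->].
have [w0 _] := prob_inhabited P.
have [s10 _] := prob_inhabited Q1.
have [s20 _] := prob_inhabited Q2.
pose c1 := g1 (X w0, s10).
pose c2 := g2 (X w0, s20).
pose Z1 := fun w : T * TS1 => g1 (X w.1, w.2).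
pose Z2 := fun w : T * TS2 => g2 (X w.1, w.2).
have mZ1 : measurable_fun setT Z1.
  apply: (measurableT_comp mg1); apply: measurable_fun_pair => //.
  exact: (measurableT_comp mX measurable_fst).
have mZ2 : measurable_fun setT Z2.
  apply: (measurableT_comp mg2); apply: measurable_fun_pair => //.
  exact: (measurableT_comp mX measurable_fst).
pose g := fun u : TX * (bool * (TS1 * TS2)) =>
  if u.2.1 then (true, (g1 (u.1, u.2.2.1), c2)) else (false, (c1, g2 (u.1, u.2.2.2))).
exists _, _, (mixQ Q1 Q2 t), _, _, g, (mixh hY1 hY2), (mixh hA1 hA2).
move=> /=.
split.
- have mG1 : measurable_fun setT (fun u : TX * (bool * (TS1 * TS2)) => (true, (g1 (u.1, u.2.2.1), c2))).
    apply: measurable_fun_pair; first exact: measurable_cst.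
    apply: measurable_fun_pair; last exact: measurable_cst.
    apply: (measurableT_comp mg1); apply: measurable_fun_pair => //.
    exact: (measurableT_comp measurable_fst (measurableT_comp measurable_snd measurable_snd)).
  have mG2 : measurable_fun setT (fun u : TX * (bool * (TS1 * TS2)) => (false, (c1, g2 (u.1, u.2.2.2)))).
    apply: measurable_fun_pair; first exact: measurable_cst.
    apply: measurable_fun_pair; first exact: measurable_cst.
    apply: (measurableT_comp mg2); apply: measurable_fun_pair => //.
    exact: (measurableT_comp measurable_snd (measurableT_comp measurable_snd measurable_snd)).
  apply: measurable_fun_if => //.
  all: try exact: (measurableT_comp measurable_fst measurable_snd).
  + exact: (measurable_funTS mG1).
  + exact: (measurable_funTS mG2).
- exact: (mix_cond P Q1 Q2 t t01 Z1 Z2 Y hY1 hY2 c1 c2 mZ1 mZ2 HY cY1 cY2).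
- exact: (mix_cond P Q1 Q2 t t01 Z1 Z2 A hA1 hA2 c1 c2 mZ1 mZ2 HA cA1 cA2).
- congr pair; symmetry.
  + exact: (mix_var P Q1 Q2 t t01 Z1 Z2 Y hY1 hY2 c1 c2 mZ1 mZ2 HY cY1 cY2).
  + exact: (mix_var P Q1 Q2 t t01 Z1 Z2 A hA1 hA2 c1 c2 mZ1 mZ2 HA cA1 cA2).
Qed.
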